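(* For every integer $t>1$ and every integer $d$ with $1\le d\le t$, \[ g\Big(1+\frac{d}{t},t\Big)\ge \frac{(2d+1)t+d^2}{(t+d)(2d+1)}. \]
   Context: Let $\mathbb{F}$ be a finite field and $x_1,\dots,x_p$ a basis of $\mathbb{F}^p$. A $[t\times m,p]$ array code is a $t\times m$ array whose entries (cells) are linear combinations of $x_1,\dots,x_p$; its columns are called servers. It has the $k$-PIR property (is a $[t\times m,p]$ $k$-PIR array code) if for every $i\in\{1,\dots,p\}$ there exist $k$ pairwise disjoint sets $S_1,\dots,S_k$ of columns such that for every $j$ the vector $x_i$ lies in the linear span of all entries of the columns in $S_j$. Its PIR rate is $k/m$. For a rational $s>1$ and a positive integer $t$ with $st$ an integer, $g(s,t)$ is the largest PIR rate $k/m$ of a $[t\times m,st]$ $k$-PIR array code (over all finite fields, all $m$ and all $k$). *)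

(* Defs.v *)
From HB Require Import structures.
From mathcomp Require Import all_boot all_order all_algebra all_field.
From mathcomp Require Import classical_sets reals.
Set Implicit Arguments. Unset Strict Implicit. Unset Printing Implicit Defensive.
Import Order.TTheory GRing.Theory Num.Theory.
Local Open Scope ring_scope.

(* A [t x m, p] array code over F: cell (r, j) (row r, column/server j)
   holds a vector of F^p, i.e. the coefficients of a linear combination
   of the basis x_1, ..., x_p (x_i = the i-th unit row vector). *)
Definition array_code (F : fieldType) (t m p : nat) := 'I_t -> 'I_m -> 'rV[F]_p.

Definition cols_span (F : fieldType) (t m p : nat) (C : array_code F t m p)
  (S : {set 'I_m}) : 'M[F]_p :=
  (\sum_(j in S) \sum_(r < t) <<C r j>>)%MS.

Definition basis_vec (F : fieldType) (p : nat) (i : 'I_p) : 'rV[F]_p :=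
  delta_mx 0 i.

Definition is_kPIR (F : fieldType) (t m p k : nat) (C : array_code F t m p) :=
  forall i : 'I_p, exists S : 'I_k -> {set 'I_m},
    (forall a b : 'I_k, a != b -> [disjoint S a & S b]) /\
    (forall a : 'I_k, (basis_vec F i <= cols_span C (S a))%MS).

Definition gPIR (R : realType) (s : rat) (t : nat) : R :=
  sup [set rho : R | exists (F : finFieldType) (p m k : nat)
                            (C : array_code F t m p),
         (p%:Q = s * t%:Q)%R /\ @is_kPIR F t m p k C /\ rho = k%:R / m%:R].

(* Main.v *)
Require Import Defs.
From HB Require Import structures.
From mathcomp Require Import all_boot all_order all_algebra all_field.
From mathcomp Require Import classical_sets reals.
From mathcomp Require Import ssrbool eqtype ssrnat seq choice fintype finset bigop.
Set Implicit Arguments. Unset Strict Implicit. Unset Printing Implicit Defensive.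
Import Order.TTheory GRing.Theory Num.Theory.
From mathcomp Require Import zify.

Definition posp p (j : 'I_p) : 0 < p := leq_ltn_trans (leq0n j) (ltn_ord j).
Definition shift p (j : 'I_p) (s : nat) : 'I_p := Ordinal (ltn_pmod (j + s) (posp j)).
Definition unshift p (i : 'I_p) (s : nat) : 'I_p :=
  Ordinal (ltn_pmod (i + (p - s %% p)) (posp i)).

Lemma shift_inj p (j : 'I_p) s1 s2 : s1 < p -> s2 < p -> shift j s1 = shift j s2 -> s1 = s2.
Proof.
move=> h1 h2 /(congr1 val) /= /eqP; rewrite eqn_modDl => /eqP.
by rewrite !modn_small.
Qed.

Lemma shift_unshift p (j i : 'I_p) s : shift j s = i -> j = unshift i s.
Proof.
move=> H; apply: val_inj; rewrite /= -H /= modnDml.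
have hp := posp j.
have E : s + (p - s %% p) = (s %/ p).+1 * p.
  have := divn_eq s p; have := ltn_pmod s hp; lia.
by rewrite -addnA E addnC modnMDl modn_small.
Qed.

Definition SA d := {S : {set 'I_(d + d)} | #|S| == d}.
Definition SB d := {T : {set 'I_(d + d)} | #|T| == d.+1}.
Definition Srv t d := ('I_(t + d) * (SA d + SB d))%type.
Definition setof d (u : (SA d + SB d)%type) : {set 'I_(d + d)} :=
  match u with inl a => val a | inr b => val b end.
Definition isB d (u : (SA d + SB d)%type) : bool := if u is inr _ then true else false.
Definition W t d (x : Srv t d) : {set 'I_(t + d)} :=
  [set shift x.1 (nat_of_ord s) | s in setof x.2].
Definition mm t d := #|{: Srv t d}|.

Definition code t d : 'I_t -> 'I_(mm t d) -> 'rV['F_2]_(t + d) :=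
  fun r j => let x := enum_val j in let s := enum (~: W x) in
    if r < size s then delta_mx ord0 (nth x.1 s r) else (\sum_(l in W x) delta_mx ord0 l)%R.

Lemma shift_inj2 t d (hdt : d <= t) (j : 'I_(t + d)) (s1 s2 : 'I_(d + d)) :
  shift j s1 = shift j s2 -> s1 = s2.
Proof.
move=> H; apply: val_inj; apply: (shift_inj _ _ H).
- by apply: (leq_trans (ltn_ord s1)); rewrite leq_add2r.
- by apply: (leq_trans (ltn_ord s2)); rewrite leq_add2r.
Qed.

Lemma card_W t d (hdt : d <= t) (x : Srv t d) : #|W x| = #|setof x.2|.
Proof.
rewrite /W card_in_imset // => s1 s2 _ _; exact: shift_inj2.
Qed.

Lemma card_setof d (u : (SA d + SB d)%type) : #|setof u| = if isB u then d.+1 else d.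
Proof. by case: u => [[a /= /eqP]|[b /= /eqP]]. Qed.

Lemma size_cW t d (hdt : d <= t) (x : Srv t d) :
  size (enum (~: W x)) = t + d - (if isB x.2 then d.+1 else d).
Proof.
have := cardsC (W x); rewrite card_ord -cardE (card_W hdt) card_setof.
move: (#|~: W x|) (if isB x.2 then d.+1 else d) => y c; lia.
Qed.

Lemma cell_unit t d (hdt : d <= t) (x : Srv t d) (l : 'I_(t + d)) :
  l \notin W x -> exists r : 'I_t, code r (enum_rank x) = delta_mx ord0 l.
Proof.
move=> lW.
have ls : l \in enum (~: W x) by rewrite mem_enum inE.
have hr : index l (enum (~: W x)) < t.
  have := index_mem l (enum (~: W x)); rewrite ls size_cW //.
  case: (isB x.2); lia.
exists (Ordinal hr); rewrite /code enum_rankK /=.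
by rewrite index_mem ls nth_index.
Qed.

Lemma cell_sum t d (hdt : d <= t) (ht : 0 < t) (x : Srv t d) :
  isB x.2 -> exists r : 'I_t, code r (enum_rank x) = (\sum_(l in W x) delta_mx ord0 l)%R.
Proof.
move=> xB.
have hr : t.-1 < t by lia.
exists (Ordinal hr); rewrite /code enum_rankK /= size_cW // xB.
have -> : t.-1 < t + d - d.+1 = false by lia.
by [].
Qed.

Definition mate t d (i : 'I_(t + d)) (x : Srv t d) : Srv t d :=
  match x with
  | (j, inl a) =>
      match [pick s in val a | shift j s == i] with
      | Some s => match @insub _ (fun T : {set 'I_(d + d)} => #|T| == d.+1) (SB d) (s |: ~: val a) with
                  | Some b => (j, inr b) | None => x end
      | None => x end
  | _ => x end.

Lemma mate_spec t d (i : 'I_(t + d)) (j : 'I_(t + d)) (a : SA d) :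
  i \in W (j, inl a) -> exists s (b : SB d),
    [/\ s \in val a, shift j s = i, val b = s |: ~: val a & mate i (j, inl a) = (j, inr b)].
Proof.
move=> /imsetP [s0 s0a e0].
rewrite /mate; case: pickP => [s /andP [sa /eqP si] | none]; last first.
  by move: (none s0); rewrite s0a /= e0 eqxx.
case: insubP => [b _ vb | nb].
  by exists s, b; split.
exfalso; move: nb; rewrite cardsU1 inE sa /=.
have := cardsC (val a); rewrite card_ord; move: (valP a) => /eqP ->.
move=> E; rewrite add1n; apply/negP/negPn; rewrite eqSS; apply/eqP; apply: (@addnI d); exact: E.
Qed.

Lemma mate_B t d (i j : 'I_(t + d)) (a : SA d) :
  i \in W (j, inl a) -> isB (mate i (j, inl a)).2 && (i \in W (mate i (j, inl a))).
Proof.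
move=> /mate_spec [s [b [sa si vb ->]]] /=.
by apply/imsetP; exists s; rewrite // /= vb setU11.
Qed.

Lemma mate_W t d (hdt : d <= t) (i j : 'I_(t + d)) (a : SA d) l :
  i \in W (j, inl a) -> l \in W (j, inl a) -> l \in W (mate i (j, inl a)) -> l = i.
Proof.
move=> /mate_spec [s [b [sa si vb ->]]].
move=> /imsetP [s1 s1a ->] /imsetP [s2 /= s2b /shift_inj2 e].
have {}e := e hdt; subst s2.
move: s2b; rewrite vb !inE /= s1a orbF => /eqP ->; exact: si.
Qed.

Lemma mate_inj t d (hdt : d <= t) (i j1 j2 : 'I_(t + d)) (a1 a2 : SA d) :
  i \in W (j1, inl a1) -> i \in W (j2, inl a2) ->
  mate i (j1, inl a1) = mate i (j2, inl a2) -> (j1, inl a1) = (j2, inl a2) :> Srv t d.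
Proof.
move=> /mate_spec [s1 [b1 [sa1 si1 vb1 ->]]] /mate_spec [s2 [b2 [sa2 si2 vb2 ->]]].
case=> ej eb; subst j2 b2.
have es : s1 = s2 by apply: (@shift_inj2 t d hdt j1); rewrite si1 si2.
subst s2.
have h1 : val a1 = ~: ((s1 |: ~: val a1) :\ s1) by rewrite setU1K ?setCK // inE sa1.
have h2 : val a2 = ~: ((s1 |: ~: val a2) :\ s1) by rewrite setU1K ?setCK // inE sa2.
by congr (_, inl _); apply: val_inj; rewrite h1 h2 -vb1 -vb2.
Qed.

Lemma cell_sub (F : fieldType) t m p (C : array_code F t m p) (S : {set 'I_m}) j r :
  j \in S -> (C r j <= cols_span C S)%MS.
Proof.
move=> jS; rewrite /cols_span.
apply: (sumsmx_sup j) => //; apply: (sumsmx_sup r) => //.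
by rewrite genmxE.
Qed.

Definition RecI t d (i : 'I_(t + d)) (x : Srv t d) : {set 'I_(mm t d)} :=
  if i \in W x then [set enum_rank x; enum_rank (mate i x)] else [set enum_rank x].

Lemma rec_span t d (hdt : d <= t) (ht : 0 < t) (i : 'I_(t + d)) (x : Srv t d) :
  ~~ (isB x.2 && (i \in W x)) ->
  (basis_vec 'F_2 i <= cols_span (@code t d) (RecI i x))%MS.
Proof.
rewrite /RecI; case: ifP => iW.
  case: x iW => j [a|b] iW; last by move=> /negP []; apply/andP; split.
  move=> _.
  have /andP [yB iy] := mate_B iW.
  have [r2 E2] := cell_sum hdt ht yB.
  set y := mate i (j, inl a) in yB iy E2 *.
  have -> : basis_vec 'F_2 i =
     (code r2 (enum_rank y) - \sum_(l in W y | l != i) delta_mx ord0 l)%R.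
    by rewrite E2 (bigD1 i) //= addrK.
  apply: addmx_sub; first by apply: cell_sub; rewrite !inE eqxx orbT.
  rewrite eqmx_opp; apply: summx_sub => l /andP [ly li].
  have lx : l \notin W (j, inl a).
    by apply/negP => lx; move: li; rewrite (mate_W hdt iW lx ly) eqxx.
  have [r E] := cell_unit hdt lx.
  by rewrite -E; apply: cell_sub; rewrite !inE eqxx.
move=> _.
have [r E] := cell_unit hdt (negbT iW).
by rewrite /basis_vec -E; apply: cell_sub; rewrite !inE eqxx.
Qed.

Lemma disj_of (T : finType) (A B : {set T}) :
  (forall z, z \in A -> z \in B -> False) -> [disjoint A & B].
Proof.
move=> H; rewrite -setI_eq0; apply/eqP/setP => z; rewrite !inE.
by apply/negbTE/negP => /andP [] /H.
Qed.

Lemma inRec t d (i : 'I_(t + d)) (x : Srv t d) z :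
  z \in RecI i x -> exists u, z = enum_rank u /\ (u = x \/ (i \in W x /\ u = mate i x)).
Proof.
rewrite /RecI; case: ifP => iW.
  by case/set2P => ->; [exists x; split=> //; left | exists (mate i x); split=> //; right].
by rewrite inE => /eqP ->; exists x; split=> //; left.
Qed.

Lemma mateB_gen t d (i : 'I_(t + d)) (x : Srv t d) :
  ~~ (isB x.2 && (i \in W x)) -> i \in W x ->
  isB (mate i x).2 && (i \in W (mate i x)).
Proof.
case: x => j [a|b] hx iW; first exact: mate_B.
by move: hx; rewrite /= iW.
Qed.

Lemma rec_disj t d (hdt : d <= t) (i : 'I_(t + d)) (x y : Srv t d) :
  ~~ (isB x.2 && (i \in W x)) -> ~~ (isB y.2 && (i \in W y)) -> x != y ->
  [disjoint RecI i x & RecI i y].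
Proof.
move=> hx hy nxy; apply: disj_of => z /inRec [u [-> hu]] /inRec [v [/enum_rank_inj <- hv]].
case: hu => [ux | [ix ux]]; case: hv => [uy | [iy uy]].
- by move: nxy; rewrite -ux -uy eqxx.
- by move: hx; rewrite ux in uy; rewrite uy (mateB_gen hy iy).
- by move: hy; rewrite uy in ux; rewrite ux (mateB_gen hx ix).
- move: nxy; case: x hx ix ux => j1 [a1|b1] hx ix ux; last by move: hx; rewrite /= ix.
  case: y hy iy uy => j2 [a2|b2] hy iy uy; last by move: hy; rewrite /= iy.
  by rewrite (mate_inj hdt ix iy (etrans (esym ux) uy)) eqxx.
Qed.

Lemma cardD d : #|[set p : (SB d * 'I_(d + d)) | p.2 \in val p.1]| = #|{: SB d}| * d.+1.
Proof.
rewrite -sum1_card.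
rewrite (eq_bigl (fun p : (SB d * 'I_(d + d)) => xpredT p.1 && (p.2 \in val p.1))); last first.
  by move=> p; rewrite !inE.
have -> : \sum_(p : (SB d * 'I_(d + d)) | xpredT p.1 && (p.2 \in val p.1)) 1 =
   \sum_(b : SB d) \sum_(s : 'I_(d + d) | s \in val b) 1 by rewrite pair_big_dep.
under eq_bigr => b _ do rewrite sum1_card (eqP (valP b)).
by rewrite sum_nat_const.
Qed.

Lemma cardBi t d (i : 'I_(t + d)) :
  #|[set x : Srv t d | isB x.2 && (i \in W x)]| <= #|{: SB d}| * d.+1.
Proof.
rewrite -cardD.
set D := [set p : (SB d * 'I_(d + d)) | p.2 \in val p.1].
pose f := fun p : (SB d * 'I_(d + d)) => ((unshift i p.2, inr p.1) : Srv t d).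
apply: (leq_trans _ (leq_imset_card f D)); apply: subset_leq_card.
apply/subsetP => x; rewrite inE; case: x => j [a|b] //= /imsetP [s sb e].
apply/imsetP; exists (b, s); first by rewrite inE.
by rewrite /f /= -(shift_unshift (esym e)).
Qed.

Lemma family_of (F : fieldType) t m p (C : array_code F t m p) (X : finType)
  (Xs : {set X}) (R : X -> {set 'I_m}) k (v : 'rV[F]_p) :
  k <= #|Xs| ->
  (forall x y, x \in Xs -> y \in Xs -> x != y -> [disjoint R x & R y]) ->
  (forall x, x \in Xs -> (v <= cols_span C (R x))%MS) ->
  exists S : 'I_k -> {set 'I_m},
    (forall a b : 'I_k, a != b -> [disjoint S a & S b]) /\
    (forall a : 'I_k, (v <= cols_span C (S a))%MS).
Proof.
move=> Hk Hd Hs.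
exists (fun a => R (enum_val (widen_ord Hk a))); split.
  move=> a b ab; apply: Hd; rewrite ?enum_valP //.
  apply/negP => /eqP /enum_val_inj /(congr1 val) /= e.
  by move: ab; rewrite (val_inj e) eqxx.
by move=> a; apply: Hs; rewrite enum_valP.
Qed.

Lemma code_PIR t d (hdt : d <= t) (ht : 0 < t) :
  is_kPIR (mm t d - #|{: SB d}| * d.+1) (@code t d).
Proof.
move=> i.
set Bi := [set x : Srv t d | isB x.2 && (i \in W x)].
set Xs := [set x : Srv t d | ~~ (isB x.2 && (i \in W x))].
apply: (@family_of _ _ _ _ _ _ Xs (RecI i)).
- have E1 : #|Xs| = #|~: Bi| by apply: eq_card => x; rewrite !inE.
  have := cardsC Bi; have := cardBi i; rewrite /mm -/Bi.
  move: #|Bi| #|~: Bi| #|{: SB d}| E1 => u v w -> h1 h2.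
  have -> : #|{: Srv t d}| = u + v by exact: (esym h2).
  lia.
- by move=> x y; rewrite !inE => hx hy; apply: rec_disj.
- by move=> x; rewrite inE; apply: rec_span.
Qed.

Lemma rate_le (F : finFieldType) t p m k (C : array_code F t m p) :
  0 < p -> is_kPIR k C -> k <= m.
Proof.
move=> hp H; have [S [Hd Hs]] := H (Ordinal hp); clear H.
case: k S Hd Hs => [|k] S Hd Hs; first by [].
have ne a : exists j, j \in S a.
  case: (set_0Vmem (S a)) => [e|[j ja]]; last by exists j.
  exfalso; move: (Hs a); rewrite e /cols_span big_set0 submx0 => /eqP /matrixP /(_ ord0 (Ordinal hp)).
  by rewrite !mxE /= => /eqP; rewrite oner_eq0.
have [j0 _] := ne ord0.
pose f a := odflt j0 [pick j in S a].
have fS a : f a \in S a.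
  rewrite /f; case: pickP => [j //|none]; have [j ja] := ne a; by move: (none j); rewrite ja.
have finj : injective f.
  move=> a b e; apply/eqP; apply/negPn/negP => ab.
  by move: (disjointFr (Hd a b ab) (fS a)); rewrite e fS.
by have := leq_card f finj; rewrite !card_ord.
Qed.

Lemma card_SA d : #|{: SA d}| = 'C(d + d, d).
Proof.
rewrite card_sig; have := card_draws 'I_(d + d) d; rewrite card_ord => <-.
by apply: eq_card => S; rewrite !inE.
Qed.

Lemma card_SB d : #|{: SB d}| = 'C(d + d, d.+1).
Proof.
rewrite card_sig; have := card_draws 'I_(d + d) d.+1; rewrite card_ord => <-.
by apply: eq_card => S; rewrite !inE.
Qed.

Lemma card_mm t d : mm t d = (t + d) * ('C(d + d, d) + 'C(d + d, d.+1)).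
Proof. by rewrite /mm card_prod card_sum card_ord card_SA card_SB. Qed.

Local Open Scope ring_scope.
Import Order.TTheory GRing.Theory Num.Theory.

Lemma natQ (n : nat) : n%:Q = n%:R :> rat. Proof. by []. Qed.

Lemma sQ (t d : nat) : (0 < t)%N -> (1 + d%:Q / t%:Q) * t%:Q = (t + d)%:Q.
Proof.
move=> ht; rewrite !natQ mulrDl mul1r divfK ?natrD //.
by rewrite pnatr_eq0 -lt0n.
Qed.

Theorem theorem6 (R : realType) (t d : nat) :
  (1 < t)%N -> (1 <= d <= t)%N ->
  ((2 * d + 1) * t + d ^ 2)%:R / ((t + d) * (2 * d + 1))%:R
    <= gPIR R (1 + d%:Q / t%:Q) t.
Proof.
move=> ht /andP [hd1 hdt].
have ht0 : (0 < t)%N by apply: ltnW.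
rewrite /gPIR.
match goal with |- context [reals.sup ?X] => set E := X end.
have ub : has_ubound E.
  exists 1 => rho [F [p [m [k [C [hp [hk ->]]]]]]].
  move: hp; rewrite sQ // => /eqP; rewrite eqr_nat => /eqP ep.
  subst p; have hkm := rate_le (ltn_addr d ht0) hk.
  have [->|m0] := eqVneq m 0%N; first by rewrite invr0 mulr0.
  by rewrite ler_pdivrMr ?mul1r ?ler_nat // ltr0n lt0n.
pose k0 := (mm t d - #|{: SB d}| * d.+1)%N.
have mem : E (k0%:R / (mm t d)%:R).
  exists 'F_2, (t + d)%N, (mm t d), k0, (@code t d); split; first by rewrite sQ.
  by split=> //; apply: code_PIR.
have h := ub_le_sup ub mem. apply: le_trans h.
have mpos : (0 < mm t d)%N by rewrite card_mm muln_gt0 addn_gt0 ht0 /= addn_gt0 bin_gt0 leq_addl.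
have Bpos : (0 < (t + d) * (2 * d + 1))%N by rewrite muln_gt0 addn_gt0 ht0 addn1.
rewrite ler_pdivrMr ?ltr0n // mulrAC ler_pdivlMr ?ltr0n // -!natrM ler_nat.
rewrite /k0 card_SB card_mm.
have rel := mul_bin_left (d + d) d.
move: rel; rewrite addnK.
move: ('C(d + d, d)) ('C(d + d, d.+1)) => X Y rel.
nia.
Qed.
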